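(* Let $V$ be a finite nonempty set of voters, $A$ a finite set of alternatives, and $F:\mathcal{P}(V,A)\to S_2(A)$ an irreducible, weakly viable consular election rule satisfying SPP and SPO. Let $R\subseteq S_2(A)$ be the range of $F$ and let $D=\{\alpha(L)|_R : L \text{ a linear order on } A\}$. Then $D$ is a linked domain of linear orders over the set $R$.
   Context: A profile assigns to each voter $i\in V$ a linear order $P_i$ on $A$; $P_i'P_{-i}$ replaces voter $i$'s order by $P_i'$; $P|_B$ denotes restriction to $B\subseteq A$. $S_2(A)$ is the set of 2-element subsets of $A$; a consular election rule is a map $F:\mathcal{P}(V,A)\to S_2(A)$. $\mathrm{best}(P_i,W)$, $\mathrm{worst}(P_i,W)$ denote the $P_i$-best and $P_i$-worst elements of nonempty $W\subseteq A$. SPO: for all $P$, $i$, $P_i'$, $\mathrm{best}(P_i,F(P))\succeq_i\mathrm{best}(P_i,F(P_i'P_{-i}))$; SPP: same with $\mathrm{worst}$. Weakly viable: every $a\in A$ lies in $F(P)$ for some $P$. Reducible: there is a partition $A=B\uplus C$ and social choice functions $G:\mathcal{P}(V,B)\to B$, $H:\mathcal{P}(V,C)\to C$ with $F(P)=\{G(P|_B),H(P|_C)\}$ for all $P$; irreducible means not reducible. For a linear order $L$ on $A$, $\alpha(L)$ is the linear order on $S_2(A)$ given by: $X$ is above $Y$ iff $\mathrm{best}(L,X)$ is above $\mathrm{best}(L,Y)$ in $L$, or $\mathrm{best}(L,X)=\mathrm{best}(L,Y)$ and $\mathrm{worst}(L,X)$ is above $\mathrm{worst}(L,Y)$; $\alpha(L)|_R$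 is its restriction to $R$. Given a domain $D$ of linear orders over a finite set $R$, two elements $x,y\in R$ are connected in $D$ if there are orders in $D$ ranking $x$ first and $y$ second, and $y$ first and $x$ second, respectively. $D$ is linked if $R$ can be enumerated as $x_1,\dots,x_q$ such that $x_1$ is connected to $x_2$ and for every $j\ge 3$, $x_j$ is connected to at least two elements of $\{x_1,\dots,x_{j-1}\}$. *)

(* Defs.v *)
From mathcomp Require Import all_boot.
Set Implicit Arguments. Unset Strict Implicit. Unset Printing Implicit Defensive.

(* A (strict) linear order on a finite type: L x y means "x is ranked above y". *)
Definition linear_order (T : finType) (L : rel T) : Prop :=
  irreflexive L /\ transitive L /\ (forall x y, x != y -> L x y || L y x).

Definition is_profile (V T : finType) (P : V -> rel T) : Prop :=
  forall v, linear_order (P v).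

Definition upd (V T : finType) (P : V -> rel T) (i : V) (L : rel T) : V -> rel T :=
  fun v => if v == i then L else P v.

Definition restr (V T : finType) (P : V -> rel T) (B : {set T})
  : V -> rel {x : T | x \in B} :=
  fun v x y => P v (val x) (val y).

Definition is_best (T : finType) (L : rel T) (W : {set T}) (x : T) : Prop :=
  x \in W /\ forall y, y \in W -> y != x -> L x y.
Definition is_worst (T : finType) (L : rel T) (W : {set T}) (x : T) : Prop :=
  x \in W /\ forall y, y \in W -> y != x -> L y x.

Definition weakly_above (T : finType) (L : rel T) (a b : T) : Prop :=
  a = b \/ L a b.

Definition consular (V A : finType) (F : (V -> rel A) -> {set A}) : Prop :=
  forall P, is_profile P -> #|F P| = 2.

Definition SPO (V A : finType) (F : (V -> rel A) -> {set A}) : Prop :=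
  forall P i L', is_profile P -> linear_order L' ->
    forall a b, is_best (P i) (F P) a -> is_best (P i) (F (upd P i L')) b ->
      weakly_above (P i) a b.

Definition SPP (V A : finType) (F : (V -> rel A) -> {set A}) : Prop :=
  forall P i L', is_profile P -> linear_order L' ->
    forall a b, is_worst (P i) (F P) a -> is_worst (P i) (F (upd P i L')) b ->
      weakly_above (P i) a b.

Definition weakly_viable (V A : finType) (F : (V -> rel A) -> {set A}) : Prop :=
  forall a : A, exists P, is_profile P /\ a \in F P.

Definition reducible (V A : finType) (F : (V -> rel A) -> {set A}) : Prop :=
  exists B C : {set A}, B :&: C = set0 /\ B :|: C = setT /\
    exists (G : (V -> rel {x : A | x \in B}) -> {x : A | x \in B})
           (H : (V -> rel {x : A | x \in C}) -> {x : A | x \in C}),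
      forall P, is_profile P ->
        F P = [set val (G (@restr V A P B)); val (H (@restr V A P C))].

Definition irreducible (V A : finType) (F : (V -> rel A) -> {set A}) : Prop :=
  ~ reducible F.

Definition in_range (V A : finType) (F : (V -> rel A) -> {set A}) (X : {set A}) : Prop :=
  exists P, is_profile P /\ F P = X.

Definition alpha (A : finType) (L : rel A) (X Y : {set A}) : Prop :=
  exists bx by_ wx wy,
    is_best L X bx /\ is_best L Y by_ /\ is_worst L X wx /\ is_worst L Y wy /\
    (L bx by_ \/ (bx = by_ /\ L wx wy)).

(* D = { alpha(L)|_R : L linear order on A } ; an element of D is represented by
   the relation alpha L, only ever evaluated on elements of R. *)
Definition alpha_domain (A : finType) (M : {set A} -> {set A} -> Prop) : Prop :=
  exists L : rel A, linear_order L /\ M = alpha L.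

Definition linear_on (T : Type) (R : T -> Prop) (M : T -> T -> Prop) : Prop :=
  (forall x, R x -> ~ M x x) /\
  (forall x y z, R x -> R y -> R z -> M x y -> M y z -> M x z) /\
  (forall x y, R x -> R y -> x <> y -> M x y \/ M y x).

Definition first_second (T : Type) (R : T -> Prop) (M : T -> T -> Prop) (x y : T) : Prop :=
  R x /\ R y /\ x <> y /\
  (forall z, R z -> z <> x -> M x z) /\
  (forall z, R z -> z <> x -> z <> y -> M y z).

Definition connected_in (T : Type) (R : T -> Prop) (D : (T -> T -> Prop) -> Prop) (x y : T) : Prop :=
  (exists M, D M /\ first_second R M x y) /\ (exists M, D M /\ first_second R M y x).

Definition linked (T : eqType) (R : T -> Prop) (D : (T -> T -> Prop) -> Prop) : Prop :=
  exists (s : seq T) (x0 : T),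
    uniq s /\ (forall x, x \in s <-> R x) /\ 2 <= size s /\
    connected_in R D (nth x0 s 0) (nth x0 s 1) /\
    (forall j, 2 <= j < size s ->
       exists j1 j2, j1 < j /\ j2 < j /\ j1 <> j2 /\
         connected_in R D (nth x0 s j) (nth x0 s j1) /\
         connected_in R D (nth x0 s j) (nth x0 s j2)).

(* Main.v *)
Require Import Defs.
From mathcomp Require Import all_boot.
From Stdlib Require ClassicalEpsilon FunctionalExtensionality Classical_Prop.
Set Implicit Arguments. Unset Strict Implicit. Unset Printing Implicit Defensive.

Definition Lof (A : finType) (l : seq A) : rel A :=
  fun x y => index x (l ++ enum A) < index y (l ++ enum A).

Lemma Lof_linear (A : finType) (l : seq A) : linear_order (Lof l).
Proof.
split; [|split].
- by move=> x; rewrite /Lof ltnn.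
- by move=> y x z; rewrite /Lof; apply: ltn_trans.
- move=> x y nxy; rewrite /Lof.
  have hx : x \in l ++ enum A by rewrite mem_cat mem_enum orbT.
  have hy : y \in l ++ enum A by rewrite mem_cat mem_enum orbT.
  case: ltngtP => // E; exfalso; move/negP: nxy; apply.
  by rewrite -(nth_index x hx) E (nth_index x hy).
Qed.

Lemma lin_irr (A : finType) (L : rel A) x : linear_order L -> L x x = false.
Proof. by case=> h _; apply: h. Qed.

Lemma lin_asym (A : finType) (L : rel A) x y : linear_order L -> L x y -> L y x -> False.
Proof. case=> h [t _] a b; have := t _ _ _ a b; by rewrite h. Qed.

Lemma lin_tr (A : finType) (L : rel A) x y z : linear_order L -> L x y -> L y z -> L x z.
Proof. by case=> _ [t _]; apply: t. Qed.

Lemma lin_tot (A : finType) (L : rel A) x y : linear_order L -> x != y -> L x y \/ L y x.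
Proof. by case=> _ [_ t] /t /orP. Qed.

Lemma best2 (A : finType) (L : rel A) p q : linear_order L -> L p q ->
  is_best L [set p; q] p /\ is_worst L [set p; q] q.
Proof.
move=> lin pq.
have npq : p != q by apply/eqP=> E; rewrite E lin_irr in pq.
split; split; rewrite ?inE ?eqxx ?orbT //.
- by move=> y; rewrite !inE => /orP [/eqP->|/eqP->]; rewrite ?eqxx.
- by move=> y; rewrite !inE => /orP [/eqP->|/eqP->]; rewrite ?eqxx.
Qed.

Lemma card2_bw (A : finType) (L : rel A) (X : {set A}) : linear_order L -> #|X| = 2 ->
  exists b w, X = [set b; w] /\ L b w /\ is_best L X b /\ is_worst L X w.
Proof.
move=> lin /eqP /cards2P [p [q [npq ->]]].
case: (lin_tot lin npq) => h.
- by exists p, q; split=> //; split=> //; apply: best2.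
- exists q, p; rewrite setUC; split=> //; split=> //; apply: best2 => //.
Qed.

Lemma best_uniq (A : finType) (L : rel A) (X : {set A}) a b : linear_order L ->
  is_best L X a -> is_best L X b -> a = b.
Proof.
move=> lin [ha Ha] [hb Hb]; apply/eqP; apply/negPn/negP => nab.
apply: (lin_asym lin (Ha b hb _) (Hb a ha _)); first by rewrite eq_sym.
by [].
Qed.

Lemma worst_uniq (A : finType) (L : rel A) (X : {set A}) a b : linear_order L ->
  is_worst L X a -> is_worst L X b -> a = b.
Proof.
move=> lin [ha Ha] [hb Hb]; apply/eqP; apply/negPn/negP => nab.
apply: (lin_asym lin (Ha b hb _) (Hb a ha _)); first by rewrite eq_sym.
by [].
Qed.

Lemma wa_tr (A : finType) (L : rel A) a b c : linear_order L ->
  weakly_above L a b -> weakly_above L b c -> weakly_above L a c.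
Proof.
move=> lin [E1|h1] [E2|h2]; rewrite /weakly_above; subst; auto.
right; exact: lin_tr h1 h2.
Qed.


Lemma idx3 (A : finType) (t s u x : A) : t != s -> t != u -> s != u ->
  index x ([:: t; s; u] ++ enum A) =
  if x == t then 0 else if x == s then 1 else if x == u then 2 else 3 + index x (enum A).
Proof.
move=> ts tu su /=.
rewrite !(eq_sym _ x).
by case: (x == t) => //; case: (x == s) => //; case: (x == u).
Qed.

Lemma L3_top (A : finType) (t s u x : A) : t != s -> t != u -> s != u ->
  x != t -> Lof [:: t; s; u] t x.
Proof. move=> ts tu su xt; rewrite /Lof !idx3 // eqxx (negbTE xt).
by case: (x == s) => //; case: (x == u). Qed.

Lemma L3_2 (A : finType) (t s u x : A) : t != s -> t != u -> s != u ->
  x != t -> x != s -> Lof [:: t; s; u] s x.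
Proof. move=> ts tu su xt xs; rewrite /Lof !idx3 // eqxx (negbTE xt) (negbTE xs).
rewrite (eq_sym s t) (negbTE ts). by case: (x == u). Qed.

Lemma L3_3 (A : finType) (t s u x : A) : t != s -> t != u -> s != u ->
  x != t -> x != s -> x != u -> Lof [:: t; s; u] u x.
Proof. move=> ts tu su xt xs xu; rewrite /Lof !idx3 // eqxx (negbTE xt) (negbTE xs) (negbTE xu).
by rewrite (eq_sym u t) (negbTE tu) (eq_sym u s) (negbTE su). Qed.

Lemma L3_lt3 (A : finType) (t s u x : A) : t != s -> t != u -> s != u ->
  Lof [:: t; s; u] x u -> x = t \/ x = s.
Proof. move=> ts tu su; rewrite /Lof !idx3 // eqxx.
rewrite (eq_sym u t) (negbTE tu) (eq_sym u s) (negbTE su).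
case: eqP => [->|_]; first by left.
case: eqP => [->|_]; first by right.
by case: (x == u).
Qed.

Lemma upd_upd (V A : finType) (P : V -> rel A) i L1 L2 : upd (upd P i L1) i L2 = upd P i L2.
Proof. apply: FunctionalExtensionality.functional_extensionality => v; rewrite /upd; by case: (v == i). Qed.

Lemma upd_id (V A : finType) (P : V -> rel A) i : upd P i (P i) = P.
Proof. apply: FunctionalExtensionality.functional_extensionality => v; rewrite /upd; by case: eqP => [->|]. Qed.

Lemma upd_at (V A : finType) (P : V -> rel A) i L : upd P i L i = L.
Proof. by rewrite /upd eqxx. Qed.

Lemma upd_profile (V A : finType) (P : V -> rel A) i L :
  is_profile P -> linear_order L -> is_profile (upd P i L).
Proof. move=> hP hL v; rewrite /upd; case: (v == i) => //. Qed.

Definition dom (A : finType) (L : rel A) (X Y : {set A}) : Prop :=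
  (forall a b, is_best L X a -> is_best L Y b -> weakly_above L a b) /\
  (forall a b, is_worst L X a -> is_worst L Y b -> weakly_above L a b).

Lemma spo_dom (V A : finType) (F : (V -> rel A) -> {set A}) P i L' :
  SPO F -> SPP F -> is_profile P -> linear_order L' ->
  dom (P i) (F P) (F (upd P i L')).
Proof. move=> spo spp hP hL; split; [apply: spo | apply: spp] => //. Qed.

Lemma dom_refl (A : finType) (L : rel A) (X : {set A}) : linear_order L -> dom L X X.
Proof.
move=> lin; split=> a b ha hb; left.
- exact: best_uniq ha hb.
- exact: worst_uniq ha hb.
Qed.

Lemma dom_tr (A : finType) (L : rel A) (X Y Z : {set A}) : linear_order L -> #|Y| = 2 ->
  dom L X Y -> dom L Y Z -> dom L X Z.
Proof.
move=> lin cY [h1 h2] [k1 k2].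
have [b [w [_ [_ [hb hw]]]]] := card2_bw lin cY.
split=> a c ha hc.
- exact: wa_tr lin (h1 _ _ ha hb) (k1 _ _ hb hc).
- exact: wa_tr lin (h2 _ _ ha hw) (k2 _ _ hw hc).
Qed.

Lemma unan (V A : finType) (F : (V -> rel A) -> {set A}) L Q :
  consular F -> SPO F -> SPP F -> linear_order L -> is_profile Q ->
  dom L (F (fun _ => L)) (F Q).
Proof.
move=> cF spo spp lin hQ.
pose Qs (s : seq V) := fun v => if v \in s then L else Q v.
have prof s : is_profile (Qs s) by move=> v; rewrite /Qs; case: (v \in s).
suff H : forall s, dom L (F (Qs s)) (F Q).
  have -> : (fun _ : V => L) = Qs (enum V).
    by apply: FunctionalExtensionality.functional_extensionality => v; rewrite /Qs mem_enum.
  exact: H.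
elim=> [|i s IH].
  have -> : Qs [::] = Q by apply: FunctionalExtensionality.functional_extensionality => v.
  exact: dom_refl.
have E : Qs (i :: s) = upd (Qs s) i L.
  apply: FunctionalExtensionality.functional_extensionality => v.
  by rewrite /Qs /upd in_cons; case: (v == i).
apply: (dom_tr lin (cF _ (prof s))) IH.
have := @spo_dom _ _ F (Qs (i :: s)) i (Qs s i) spo spp (prof _) (prof s i).
by rewrite E upd_upd upd_at upd_id.
Qed.


Definition good (V A : finType) (F : (V -> rel A) -> {set A}) :=
  consular F /\ SPO F /\ SPP F /\ weakly_viable F.

Lemma in_range_card (V A : finType) (F : (V -> rel A) -> {set A}) X :
  consular F -> in_range F X -> #|X| = 2.
Proof. by move=> cF [P [hP <-]]; apply: cF. Qed.

Lemma p3 (V A : finType) (F : (V -> rel A) -> {set A}) (t s u : A) : good F ->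
  t != s -> ~ in_range F [set t; s] -> in_range F [set s; u] -> u != t -> s != u ->
  in_range F [set t; u].
Proof.
move=> [cF [spo [spp wv]]] ts nts hsu ut su.
have tu : t != u by rewrite eq_sym.
pose L := Lof [:: t; s; u].
have lin : linear_order L := Lof_linear _.
pose P := fun _ : V => L.
have hP : is_profile P by [].
have [Q' [hQ' tQ']] := wv t.
have [bX [wX [EX [bw [hbX hwX]]]]] := card2_bw lin (cF _ hP).
have [d1 d2] := unan cF spo spp lin hQ'.
have htop : is_best L (F Q') t.
  by split=> // y _ yt; apply: L3_top.
have bXt : bX = t.
  case: (d1 _ _ hbX htop) => // h.
  case: (bX =P t) => // /eqP bt. exfalso; exact: lin_asym lin h (L3_top ts tu su bt).
subst bX.
have [Q [hQ FQ]] := hsu.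
have [_ d2'] := unan cF spo spp lin hQ.
rewrite FQ in d2'.
have Lsu : L s u by apply: L3_2 => //; rewrite eq_sym.
have [_ wu] := best2 lin Lsu.
have := d2' _ _ hwX wu.
case=> [Ew|h].
  by subst wX; exists P; split.
case: (L3_lt3 ts tu su h) => Ew; subst wX.
  by rewrite lin_irr in bw.
by exfalso; apply: nts; exists P; split.
Qed.

Definition inRb (V A : finType) (F : (V -> rel A) -> {set A}) (X : {set A}) : bool :=
  if ClassicalEpsilon.excluded_middle_informative (in_range F X) then true else false.

Lemma inRbP (V A : finType) (F : (V -> rel A) -> {set A}) (X : {set A}) :
  reflect (in_range F X) (inRb F X).
Proof. rewrite /inRb; case: ClassicalEpsilon.excluded_middle_informative => h; [left|right] => //. Qed.

Definition sim (V A : finType) (F : (V -> rel A) -> {set A}) (p q : A) : Prop :=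
  p = q \/ ~ in_range F [set p; q].

Definition adj (V A : finType) (F : (V -> rel A) -> {set A}) (p q : A) : Prop :=
  p != q /\ in_range F [set p; q].

Lemma sim_sym (V A : finType) (F : (V -> rel A) -> {set A}) p q : sim F p q -> sim F q p.
Proof. by rewrite /sim setUC; case=> [->|h]; [left|right]. Qed.

Lemma adj_sym (V A : finType) (F : (V -> rel A) -> {set A}) p q : adj F p q -> adj F q p.
Proof. by rewrite /adj setUC eq_sym. Qed.

Lemma sim_tr (V A : finType) (F : (V -> rel A) -> {set A}) a b c : good F ->
  sim F a b -> sim F b c -> sim F a c.
Proof.
move=> hg.
case: (a =P b) => [<-//|nab].
case=> [E|nRab]; first by [].
case: (b =P c) => [<-|nbc]; first by move=> _; right.
case=> [E|nRbc]; first by [].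
case: (a =P c) => [->|nac]; first by left.
case: (Classical_Prop.classic (in_range F [set a; c])) => hac; last by right.
exfalso; apply: nRbc; apply: (@p3 _ _ F b a c) => //.
- by apply/eqP => E; apply: nab.
- by rewrite setUC.
- by apply/eqP => E; apply: nbc.
- by apply/eqP.
Qed.

Lemma adj_nsim (V A : finType) (F : (V -> rel A) -> {set A}) p q : adj F p q -> ~ sim F p q.
Proof. by move=> [/eqP pq h] [E|E]. Qed.

Lemma nsim_adj (V A : finType) (F : (V -> rel A) -> {set A}) p q : ~ sim F p q -> adj F p q.
Proof.
move=> h; split.
- by apply/eqP => E; apply: h; left.
- by apply: Classical_Prop.NNPP => K; apply: h; right.
Qed.

Lemma pigeon (V A : finType) (F : (V -> rel A) -> {set A}) x y z u v : good F ->
  adj F x y -> adj F x z -> adj F y z ->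
  exists p, (p = x \/ p = y \/ p = z) /\ adj F p u /\ adj F p v.
Proof.
move=> hg axy axz ayz.
have key p q w : adj F p q -> sim F p w -> sim F q w -> False.
  move=> apq h1 h2; apply: (adj_nsim apq); apply: sim_tr hg h1 (sim_sym h2).
apply: Classical_Prop.NNPP => H.
have Hp p : (p = x \/ p = y \/ p = z) -> sim F p u \/ sim F p v.
  move=> hp; apply: Classical_Prop.NNPP => K; apply: H; exists p; split=> //.
  have [K1 K2] := Classical_Prop.not_or_and _ _ K.
  by split; apply: nsim_adj.
case: (Hp x (or_introl erefl)) => hx;
case: (Hp y (or_intror (or_introl erefl))) => hy;
case: (Hp z (or_intror (or_intror erefl))) => hz;
first [exact: key axy hx hy | exact: key axz hx hz | exact: key ayz hy hz].
Qed.


Definition splitS (V A : finType) (F : (V -> rel A) -> {set A}) (S : {set A}) :=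
  forall X, in_range F X -> exists p q, X = [set p; q] /\ p \in S /\ q \notin S.

Definition gS (V A : finType) (F : (V -> rel A) -> {set A}) (S : {set A}) (d : A)
  (P : V -> rel A) : A := odflt d [pick x in F P :&: S].

Lemma gS_spec (V A : finType) (F : (V -> rel A) -> {set A}) (S : {set A}) d P :
  splitS F S -> is_profile P ->
  exists q, F P = [set gS F S d P; q] /\ gS F S d P \in S /\ q \notin S.
Proof.
move=> sp hP.
have [p [q [E [pS qS]]]] := sp (F P) (ex_intro _ P (conj hP erefl)).
have -> : gS F S d P = p.
  rewrite /gS; case: pickP => [x|] /=.
    rewrite E !inE => /andP [/orP [/eqP->|/eqP->] xS] //.
    by rewrite xS in qS.
  by move/(_ p); rewrite E !inE eqxx pS.
by exists q.
Qed.

Lemma core (V A : finType) (F : (V -> rel A) -> {set A}) (S : {set A}) d Q i L2 :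
  good F -> splitS F S -> is_profile Q -> linear_order L2 ->
  (forall x y, x \in S -> y \in S -> L2 x y = Q i x y) ->
  Q i (gS F S d Q) (gS F S d (upd Q i L2)) -> False.
Proof.
move=> [cF [spo [spp wv]]] sp hQ lin2 agr.
have hQ2 := upd_profile i hQ lin2.
have [c1 [E1 [b1S c1S]]] := gS_spec d sp hQ.
have [c2 [E2 [b2S c2S]]] := gS_spec d sp hQ2.
move: E1 b1S E2 b2S.
set b1 := gS F S d Q; set b2 := gS F S d (upd Q i L2).
move=> E1 b1S E2 b2S h12.
have linQ : linear_order (Q i) := hQ i.
have b12 : b1 != b2 by apply/eqP => E; rewrite E lin_irr in h12.
have c2b1 : c2 != b1 by apply/eqP => E; rewrite E b1S in c2S.
have c2b2 : c2 != b2 by apply/eqP => E; rewrite E b2S in c2S.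
have b1c2 : b1 != c2 by rewrite eq_sym.
have b2c2 : b2 != c2 by rewrite eq_sym.
pose M := Lof [:: b1; b2; c2].
have linM : linear_order M := Lof_linear _.
have hQM := upd_profile i hQ linM.
have [w [EX [gS' wS]]] := gS_spec d sp hQM.
move: EX gS'; set g := gS F S d (upd Q i M) => EX gS'.
have [d1 _] : dom M (F (upd Q i M)) (F Q).
  by have := @spo_dom _ _ F (upd Q i M) i (Q i) spo spp hQM linQ; rewrite upd_at upd_upd upd_id.
have [_ d2] : dom M (F (upd Q i M)) (F (upd Q i L2)).
  by have := @spo_dom _ _ F (upd Q i M) i L2 spo spp hQM lin2; rewrite upd_at upd_upd.
have hb1 : is_best M (F Q) b1.
  split; first by rewrite E1 !inE eqxx.
  by move=> y _ yb; apply: L3_top.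
have [bX [wX [EX' [bwX [hbX hwX]]]]] := card2_bw linM (cF _ hQM).
have bXb1 : bX = b1.
  case: (d1 _ _ hbX hb1) => // h; case: (bX =P b1) => // /eqP bt; exfalso.
  exact: lin_asym linM h (L3_top b12 b1c2 b2c2 bt).
subst bX.
have gb1 : g = b1.
  have : b1 \in F (upd Q i M) by rewrite EX' !inE eqxx.
  rewrite EX !inE => /orP [/eqP -> //|/eqP E].
  by rewrite -E b1S in wS.
rewrite gb1 in EX.
have wb1 : w != b1 by apply/eqP => E; rewrite E b1S in wS.
have Mb1w : M b1 w by apply: L3_top.
have [_ hw] := best2 linM Mb1w.
rewrite -EX in hw.
have Mb2c2 : M b2 c2 by apply: L3_2.
have [_ hc2] := best2 linM Mb2c2. rewrite -E2 in hc2.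
have wc2 : w = c2.
  case: (d2 _ _ hw hc2) => // h.
  case: (L3_lt3 b12 b1c2 b2c2 h) => E; first by rewrite E eqxx in wb1.
  by rewrite E b2S in wS.
subst w.
have [e1 e2] : dom L2 (F (upd Q i L2)) (F (upd Q i M)).
  by have := @spo_dom _ _ F (upd Q i L2) i M spo spp hQ2 linM; rewrite upd_at upd_upd.
have L2b12 : L2 b1 b2 by rewrite agr.
case: (lin_tot lin2 b1c2) => h.
- have [hbX2 _] := best2 lin2 h. rewrite -EX in hbX2.
  have [bb [ww [EE [_ [hbb _]]]]] := card2_bw lin2 (cF _ hQ2).
  have : bb \in [set b2; c2] by rewrite -E2; case: hbb.
  rewrite !inE => /orP [/eqP Eb|/eqP Eb]; subst bb.
  + case: (e1 _ _ hbb hbX2) => [Eb|hb]; first by rewrite Eb eqxx in b12.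
    exact: lin_asym lin2 hb L2b12.
  + case: (e1 _ _ hbb hbX2) => [Eb|hb]; first by rewrite Eb eqxx in c2b1.
    exact: lin_asym lin2 hb h.
- have [_ hwX2] := best2 lin2 h. rewrite setUC -EX in hwX2.
  have Lc2b2 : L2 c2 b2 := lin_tr lin2 h L2b12.
  have [_ hw2] := best2 lin2 Lc2b2. rewrite setUC -E2 in hw2.
  case: (e2 _ _ hw2 hwX2) => [Eb|hb]; first by rewrite Eb eqxx in b12.
  exact: lin_asym lin2 hb L2b12.
Qed.

Lemma single (V A : finType) (F : (V -> rel A) -> {set A}) (S : {set A}) d Q i L2 :
  good F -> splitS F S -> is_profile Q -> linear_order L2 ->
  (forall x y, x \in S -> y \in S -> L2 x y = Q i x y) ->
  gS F S d (upd Q i L2) = gS F S d Q.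
Proof.
move=> hg sp hQ lin2 agr.
have hQ2 := upd_profile i hQ lin2.
have [q1 [E1 [b1S _]]] := gS_spec d sp hQ.
have [q2 [E2 [b2S _]]] := gS_spec d sp hQ2.
apply/eqP; apply/negPn/negP => ne.
case: (lin_tot (hQ i) ne) => h.
- apply: (@core _ _ F S d (upd Q i L2) i (Q i) hg sp hQ2 (hQ i)).
  + by move=> x y hx hy; rewrite upd_at agr.
  + by rewrite upd_upd upd_id upd_at agr.
- exact: (@core _ _ F S d Q i L2 hg sp hQ lin2 agr).
Qed.

Lemma invar (V A : finType) (F : (V -> rel A) -> {set A}) (S : {set A}) d P P' :
  good F -> splitS F S -> is_profile P -> is_profile P' ->
  (forall v x y, x \in S -> y \in S -> P v x y = P' v x y) ->
  gS F S d P = gS F S d P'.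
Proof.
move=> hg sp hP hP' agr.
pose Ps (s : seq V) := fun v => if v \in s then P' v else P v.
have prof s : is_profile (Ps s) by move=> v; rewrite /Ps; case: (v \in s).
suff H : forall s, gS F S d (Ps s) = gS F S d P.
  have <- : Ps (enum V) = P'.
    by apply: FunctionalExtensionality.functional_extensionality => v; rewrite /Ps mem_enum.
  by rewrite H.
elim=> [|i s IH].
  have -> : Ps [::] = P by apply: FunctionalExtensionality.functional_extensionality => v.
  by [].
have -> : Ps (i :: s) = upd (Ps s) i (P' i).
  apply: FunctionalExtensionality.functional_extensionality => v.
  by rewrite /Ps /upd in_cons; case: eqP => [->|].
rewrite single //.
move=> x y hx hy; rewrite /Ps; case: (i \in s) => //.
by rewrite agr.
Qed.

Lemma Gval (V A : finType) (F : (V -> rel A) -> {set A}) (S : {set A}) d (hd : d \in S) :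
  good F -> splitS F S ->
  exists G : (V -> rel {x : A | x \in S}) -> {x : A | x \in S},
   forall P : V -> rel A, is_profile P -> val (G (@restr V A P S)) = gS F S d P.
Proof.
move=> hg sp.
exists (fun Q => match ClassicalEpsilon.excluded_middle_informative
                         (exists P, is_profile P /\ @restr V A P S = Q) with
         | left h => insubd (exist (fun x => x \in S) d hd)
              (gS F S d (proj1_sig (ClassicalEpsilon.constructive_indefinite_description _ h)))
         | right _ => exist (fun x => x \in S) d hd end).
move=> P hP.
case: ClassicalEpsilon.excluded_middle_informative => [h|n]; last first.
  by exfalso; apply: n; exists P.
case: (ClassicalEpsilon.constructive_indefinite_description _ h) => P' [hP' EP'] /=.
have [_ [_ [gS' _]]] := gS_spec d sp hP'.
rewrite val_insubd gS'.
apply: invar => // v x y hx hy.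
have := congr1 (fun f => f v (exist (fun x => x \in S) x hx) (exist (fun x => x \in S) y hy)) EP'.
by rewrite /restr.
Qed.

Lemma reduce (V A : finType) (F : (V -> rel A) -> {set A}) (B : {set A}) b0 c0 :
  good F -> splitS F B -> b0 \in B -> c0 \notin B -> reducible F.
Proof.
move=> hg sp hb0 hc0.
have sp' : splitS F (~: B).
  move=> X hX; have [p [q [E [pB qB]]]] := sp X hX.
  by exists q, p; rewrite setUC inE qB inE pB.
have hc0' : c0 \in ~: B by rewrite inE.
have [G hG] := Gval hb0 hg sp.
have [H hH] := Gval hc0' hg sp'.
exists B, (~: B); split; first by rewrite setICr.
split; first by rewrite setUCr.
exists G, H => P hP.
rewrite hG // hH //.
have [q [E [gB qB]]] := gS_spec b0 sp hP.
have [q' [E' [hC _]]] := gS_spec c0 sp' hP.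
have : gS F (~: B) c0 P \in F P by rewrite E' !inE eqxx.
rewrite E !inE => /orP [/eqP Eg|/eqP Eq].
  by rewrite Eg inE gB in hC.
by rewrite Eq.
Qed.


Lemma fs_share (V A : finType) (F : (V -> rel A) -> {set A}) (t u w : A) :
  consular F -> t != u -> t != w -> u != w ->
  in_range F [set t; u] -> in_range F [set t; w] ->
  first_second (in_range F) (alpha (Lof [:: t; u; w])) [set t; u] [set t; w].
Proof.
move=> cF tu tw uw hu hw.
have lin := Lof_linear [:: t; u; w].
have Ltu : Lof [:: t; u; w] t u by apply: L3_top; rewrite // eq_sym.
have Ltw : Lof [:: t; u; w] t w by apply: L3_top; rewrite // eq_sym.
have [btu wtu] := best2 lin Ltu.
have [btw wtw] := best2 lin Ltw.
split; [done|split; [done|split]].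
  move=> E; have : w \in [set t; u] by rewrite E !inE eqxx orbT.
  rewrite !inE => /orP [/eqP E'|/eqP E']; [by rewrite E' eqxx in tw | by rewrite E' eqxx in uw].
split.
- move=> Z hZ nZ.
  have [bz [wz [EZ [bw [hb hwz]]]]] := card2_bw lin (in_range_card cF hZ).
  exists t, bz, u, wz; do 4 (split => //).
  case: (bz =P t) => [Eb|nb].
  + right; split => //; subst bz.
    apply: L3_2 => //.
      by apply/eqP => E; rewrite E lin_irr in bw.
    by apply/eqP => E; apply: nZ; rewrite EZ E.
  + by left; apply: L3_top => //; apply/eqP.
- move=> Z hZ nZX nZY.
  have [bz [wz [EZ [bw [hb hwz]]]]] := card2_bw lin (in_range_card cF hZ).
  exists t, bz, w, wz; do 4 (split => //).
  case: (bz =P t) => [Eb|nb].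
  + right; split => //; subst bz.
    apply: L3_3 => //.
    * by apply/eqP => E; rewrite E lin_irr in bw.
    * by apply/eqP => E; apply: nZX; rewrite EZ E.
    * by apply/eqP => E; apply: nZY; rewrite EZ E.
  + by left; apply: L3_top => //; apply/eqP.
Qed.

Lemma conn_share (V A : finType) (F : (V -> rel A) -> {set A}) (t u w : A) :
  consular F -> t != u -> t != w -> u != w ->
  in_range F [set t; u] -> in_range F [set t; w] ->
  connected_in (in_range F) (@alpha_domain A) [set t; u] [set t; w].
Proof.
move=> cF tu tw uw hu hw; split.
- exists (alpha (Lof [:: t; u; w])); split; last exact: fs_share.
  by exists (Lof [:: t; u; w]); split => //; apply: Lof_linear.
- exists (alpha (Lof [:: t; w; u])); split; last by apply: fs_share; rewrite // eq_sym.
  by exists (Lof [:: t; w; u]); split => //; apply: Lof_linear.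
Qed.

Lemma conn_sym (T : Type) (R : T -> Prop) D x y :
  connected_in R D x y -> connected_in R D y x.
Proof. by case. Qed.

Lemma alpha_lin (V A : finType) (F : (V -> rel A) -> {set A}) L :
  consular F -> linear_order L -> linear_on (in_range F) (alpha L).
Proof.
move=> cF lin; split; [|split].
- move=> X _ [bx [by_ [wx [wy [hbx [hby [hwx [hwy H]]]]]]]].
  rewrite (best_uniq lin hby hbx) (worst_uniq lin hwy hwx) in H.
  by case: H => [h|[_ h]]; rewrite lin_irr in h.
- move=> X Y Z _ _ _ [b1 [b2 [w1 [w2 [h1 [h2 [h3 [h4 H1]]]]]]]]
    [b2' [b3 [w2' [w3 [h2' [h5 [h4' [h6 H2]]]]]]]].
  have Eb := best_uniq lin h2' h2; have Ew := worst_uniq lin h4' h4.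
  subst b2' w2'.
  exists b1, b3, w1, w3; do 4 (split => //).
  case: H1 => [l1|[e1 l1]]; case: H2 => [l2|[e2 l2]].
  + by left; apply: lin_tr l1 l2.
  + by left; rewrite -e2.
  + by left; rewrite e1.
  + by right; split; [rewrite e1 | apply: lin_tr l1 l2].
- move=> X Y hX hY nXY.
  have [bx [wx [EX [bwx [hbx hwx]]]]] := card2_bw lin (in_range_card cF hX).
  have [by_ [wy [EY [bwy [hby hwy]]]]] := card2_bw lin (in_range_card cF hY).
  case: (bx =P by_) => [Eb|nb].
  + have nw : wx != wy by apply/eqP => Ew; apply: nXY; rewrite EX EY Eb Ew.
    case: (lin_tot lin nw) => h; [left|right].
    * by exists bx, by_, wx, wy; do 4 (split => //); right.
    * by exists by_, bx, wy, wx; do 4 (split => //); right.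
  + case: (lin_tot lin (introN eqP nb)) => h; [left|right].
    * by exists bx, by_, wx, wy; do 4 (split => //); left.
    * by exists by_, bx, wy, wx; do 4 (split => //); left.
Qed.

Lemma mem2set (A : finType) (x u v : A) : x \in [set u; v] -> u != v ->
  exists w, [set u; v] = [set x; w] /\ w != x.
Proof.
rewrite !inE => /orP [/eqP->|/eqP->] uv.
- by exists v; split => //; rewrite eq_sym.
- by exists u; split; [rewrite setUC|].
Qed.


Lemma no_tri_red (V A : finType) (F : (V -> rel A) -> {set A}) : good F ->
  ~ (exists x y z, adj F x y /\ adj F x z /\ adj F y z) -> reducible F.
Proof.
move=> hg notri.
have [cF _] := hg.
pose P0 := fun _ : V => Lof ([::] : seq A).
have hP0 : is_profile P0 by move=> v; apply: Lof_linear.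
have /eqP /cards2P [b0 [c0 [bc E0]]] := cF _ hP0.
have ab : adj F b0 c0 by split => //; exists P0; split.
pose inb x := if ClassicalEpsilon.excluded_middle_informative (sim F x b0) then true else false.
pose B := [set x | inb x].
have inbP x : reflect (sim F x b0) (x \in B).
  by rewrite inE /inb; case: ClassicalEpsilon.excluded_middle_informative => h; [left|right].
apply: (@reduce _ _ F B b0 c0 hg).
- move=> X hX.
  have /eqP /cards2P [p [q [npq EX]]] := in_range_card cF hX.
  have apq : adj F p q by split; [|rewrite -EX].
  case: (inbP p) => hp.
  + exists p, q; split => //; split; first by apply/inbP.
    apply/inbP => hq; apply: (adj_nsim apq); exact: sim_tr hg hp (sim_sym hq).
  + case: (inbP q) => hq.
    * exists q, p; rewrite setUC; split => //; split; [by apply/inbP | by apply/inbP].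
    * exfalso; apply: notri; exists b0, p, q; split; last split.
      -- by apply: adj_sym; apply: nsim_adj.
      -- by apply: adj_sym; apply: nsim_adj.
      -- exact: apq.
- by apply/inbP; left.
- by apply/inbP => h; exact: adj_nsim ab (sim_sym h).
Qed.


Lemma tri_linked (V A : finType) (F : (V -> rel A) -> {set A}) x y z : good F ->
  adj F x y -> adj F x z -> adj F y z -> linked (in_range F) (@alpha_domain A).
Proof.
move=> hg axy axz ayz.
have [cF _] := hg.
have [xy Rxy] := axy; have [xz Rxz] := axz; have [yz Ryz] := ayz.
have yx : y != x by rewrite eq_sym.
have zx : z != x by rewrite eq_sym.
have zy : z != y by rewrite eq_sym.
have Ryx : in_range F [set y; x] by rewrite setUC.
have Rzx : in_range F [set z; x] by rewrite setUC.
have Rzy : in_range F [set z; y] by rewrite setUC.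
pose Tl := [:: [set x; y]; [set x; z]; [set y; z]].
pose touch (X : {set A}) := [|| x \in X, y \in X | z \in X].
pose El := [seq X <- enum [set: {set A}] | inRb F X && (X \notin Tl)].
pose R1 := [seq X <- El | touch X].
pose R2 := [seq X <- El | ~~ touch X].
pose s := Tl ++ R1 ++ R2.
have memT X : X \in Tl -> in_range F X.
  by rewrite !inE => /or3P [/eqP->|/eqP->|/eqP->].
have n1 : [set x; y] != [set x; z].
  apply/eqP => E1; have : z \in [set x; y] by rewrite E1 !inE eqxx orbT.
  by rewrite !inE => /orP [/eqP E2|/eqP E2]; [rewrite E2 eqxx in xz | rewrite E2 eqxx in yz].
have n2 : [set x; y] != [set y; z].
  apply/eqP => E1; have : z \in [set x; y] by rewrite E1 !inE eqxx orbT.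
  by rewrite !inE => /orP [/eqP E2|/eqP E2]; [rewrite E2 eqxx in xz | rewrite E2 eqxx in yz].
have n3 : [set x; z] != [set y; z].
  apply/eqP => E1; have : x \in [set y; z] by rewrite -E1 !inE eqxx.
  by rewrite !inE => /orP [/eqP E2|/eqP E2]; [rewrite E2 eqxx in xy | rewrite E2 eqxx in xz].
have uT : uniq Tl by rewrite /= !inE negb_or n1 n2 n3.
have uE : uniq El by apply: filter_uniq; apply: enum_uniq.
have us : uniq s.
  rewrite /s cat_uniq uT /=; apply/andP; split.
    apply/hasPn => X; rewrite mem_cat !mem_filter => /orP [/andP [_ /andP [/andP [_ h] _]]|/andP [_ /andP [/andP [_ h] _]]] //.
  rewrite cat_uniq; apply/and3P; split; [exact: filter_uniq uE| |exact: filter_uniq uE].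
  apply/hasPn => X; rewrite !mem_filter => /andP [h _].
  by rewrite negb_and h.
have mem_s X : X \in s <-> in_range F X.
  split.
    rewrite /s !mem_cat => /or3P [h|h|h]; first exact: memT h.
    + by move: h; rewrite !mem_filter => /andP [_ /andP [/andP [/inRbP h _] _]].
    + by move: h; rewrite !mem_filter => /andP [_ /andP [/andP [/inRbP h _] _]].
  move=> hX; rewrite /s !mem_cat.
  case hT: (X \in Tl) => //=.
  have hE : X \in El by rewrite mem_filter hT mem_enum in_setT /= !andbT; apply/inRbP.
  have hb : inRb F X by apply/inRbP.
  by rewrite !mem_filter hT hb -enumT mem_enum !inE /=; case: (touch X).
have cs := @conn_share _ _ F.
exists s, set0; split => //; split => //; split => //; split.
  by apply: cs.
move=> j /andP [j2 js].
set e := nth set0 s j.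
have es : e \in s by apply: mem_nth.
have ie : index e s = j by apply: index_uniq.
case: (j =P 2) => [j_2|jn2].
  exists 0, 1; rewrite j_2; do 3 (split => //).
  rewrite /e j_2 /=.
  split.
    have -> : [set x; y] = [set y; x] by rewrite setUC.
    by apply: cs.
  have -> : [set y; z] = [set z; y] by rewrite setUC.
  have -> : [set x; z] = [set z; x] by rewrite setUC.
  by apply: cs.
have j3 : 3 <= j by case: j j2 jn2 {js e es ie} => [|[|[|j]]].
have eT : e \notin Tl.
  apply/negP => h; move: ie; rewrite /s index_cat h => ie.
  have : index e Tl < size Tl by rewrite index_mem.
  by rewrite ie /= ltnNge j3.
have hR : in_range F e by apply/mem_s.
have T0 : [set x; y] \in Tl by rewrite /Tl !inE eqxx.
have T1 : [set x; z] \in Tl by rewrite /Tl !inE eqxx orbT.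
have T2 : [set y; z] \in Tl by rewrite /Tl !inE eqxx !orbT.
have j0 : 0 < j by apply: leq_trans j3.
have j1 : 1 < j by apply: leq_trans j3.
have /eqP /cards2P [u [v [uv Ee]]] := in_range_card cF hR.
have ue : u \in e by rewrite Ee !inE eqxx.
have ve : v \in e by rewrite Ee !inE eqxx orbT.
case ht: (touch e).
- move: ht; rewrite /touch => /or3P [hx|hy|hz].
  + have hx' : x \in [set u; v] by rewrite -Ee.
    have [w [Ew wx]] := mem2set hx' uv.
    have eEq : e = [set x; w] by rewrite Ee Ew.
    have wy : w != y by apply/eqP => E'; move: eT; rewrite eEq E' T0.
    have wz : w != z by apply/eqP => E'; move: eT; rewrite eEq E' T1.
    have Rxw : in_range F [set x; w] by rewrite -eEq.
    exists 0, 1; do 3 (split => //).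
    rewrite eEq /=; split; apply: cs => //; by rewrite eq_sym.
  + have hy' : y \in [set u; v] by rewrite -Ee.
    have [w [Ew wy]] := mem2set hy' uv.
    have eEq : e = [set y; w] by rewrite Ee Ew.
    have wx : w != x.
      apply/eqP => E'; move: eT; rewrite eEq E'.
      have -> : [set y; x] = [set x; y] by rewrite setUC.
      by rewrite T0.
    have wz : w != z by apply/eqP => E'; move: eT; rewrite eEq E' T2.
    have Ryw : in_range F [set y; w] by rewrite -eEq.
    exists 0, 2; do 3 (split => //).
    rewrite eEq /=; split.
      have -> : [set x; y] = [set y; x] by rewrite setUC.
      by apply: cs => //; rewrite eq_sym.
    by apply: cs => //; rewrite eq_sym.
  + have hz' : z \in [set u; v] by rewrite -Ee.
    have [w [Ew wz]] := mem2set hz' uv.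
    have eEq : e = [set z; w] by rewrite Ee Ew.
    have wx : w != x.
      apply/eqP => E'; move: eT; rewrite eEq E'.
      have -> : [set z; x] = [set x; z] by rewrite setUC.
      by rewrite T1.
    have wy : w != y.
      apply/eqP => E'; move: eT; rewrite eEq E'.
      have -> : [set z; y] = [set y; z] by rewrite setUC.
      by rewrite T2.
    have Rzw : in_range F [set z; w] by rewrite -eEq.
    exists 1, 2; do 3 (split => //).
    rewrite eEq /=; split.
      have -> : [set x; z] = [set z; x] by rewrite setUC.
      by apply: cs => //; rewrite eq_sym.
    have -> : [set y; z] = [set z; y] by rewrite setUC.
    by apply: cs => //; rewrite eq_sym.
- move/negbT: ht; rewrite /touch !negb_or => /and3P [nx ny nz].
  have [p [hp [[pu Rpu] [pv Rpv]]]] := @pigeon _ _ F x y z u v hg axy axz ayz.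
  have touchp (f : {set A}) : p \in f -> touch f.
    by move=> pf; rewrite /touch; case: hp => [E'|[E'|E']]; rewrite -E' pf ?orbT.
  have idx_lt (f : {set A}) : in_range F f -> p \in f -> index f s < size (Tl ++ R1).
    move=> hf pf.
    have fTR : f \in Tl ++ R1.
      rewrite mem_cat; case fT: (f \in Tl) => //=.
      have hb : inRb F f by apply/inRbP.
      by rewrite mem_filter touchp // mem_filter hb fT mem_enum in_setT.
    by rewrite /s catA index_cat fTR index_mem.
  have ie_ge : size (Tl ++ R1) <= j.
    have eTR : e \notin Tl ++ R1.
      by rewrite mem_cat negb_or eT /= mem_filter /touch (negbTE nx) (negbTE ny) (negbTE nz).
    by rewrite -ie /s catA index_cat (negbTE eTR) leq_addr.
  have Rf1 : in_range F [set p; u] by [].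
  have Rf2 : in_range F [set p; v] by [].
  have f1s : [set p; u] \in s by apply/mem_s.
  have f2s : [set p; v] \in s by apply/mem_s.
  have pf1 : p \in [set p; u] by rewrite !inE eqxx.
  have pf2 : p \in [set p; v] by rewrite !inE eqxx.
  exists (index [set p; u] s), (index [set p; v] s); split.
    exact: leq_trans (idx_lt _ Rf1 pf1) ie_ge.
  split; first exact: leq_trans (idx_lt _ Rf2 pf2) ie_ge.
  split.
    move=> Eq.
    have : nth set0 s (index [set p; u] s) = nth set0 s (index [set p; v] s) by rewrite Eq.
    rewrite !nth_index // => Ef.
    have : v \in [set p; u] by rewrite Ef !inE eqxx orbT.
    rewrite !inE => /orP [/eqP E'|/eqP E']; first by rewrite E' eqxx in pv.
    by rewrite E' eqxx in uv.
  rewrite !nth_index // Ee.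
  have up : u != p by rewrite eq_sym.
  have vp : v != p by rewrite eq_sym.
  have vu : v != u by rewrite eq_sym.
  have Ruv : in_range F [set u; v] by rewrite -Ee.
  split.
    have -> : [set p; u] = [set u; p] by rewrite setUC.
    by apply: cs => //; rewrite setUC.
  have -> : [set u; v] = [set v; u] by rewrite setUC.
  have -> : [set p; v] = [set v; p] by rewrite setUC.
  by apply: cs => //; rewrite setUC.
Qed.


Theorem proposition51 (V A : finType) (F : (V -> rel A) -> {set A}) :
  0 < #|V| ->
  consular F -> irreducible F -> weakly_viable F -> SPP F -> SPO F ->
  (forall M, alpha_domain M -> linear_on (in_range F) M) /\
  linked (in_range F) (@alpha_domain A).
Proof.
move=> _ cF irr wv spp spo.
have hg : good F by split; [|split; [|split]].
split.
  by move=> M [L [lin ->]]; apply: alpha_lin.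
case: (Classical_Prop.classic (exists x y z, adj F x y /\ adj F x z /\ adj F y z))
  => [[x [y [z [axy [axz ayz]]]]]|notri].
  exact: tri_linked hg axy axz ayz.
by exfalso; apply: irr; apply: no_tri_red.
Qed.
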